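(* Let $k$ be a field of characteristic $p>0$, $P$ a finite poset, $R=\mathcal{R}_k[J(P)]$ the Hibi ring and $\mathfrak{m}=R_+$. Then \[ \liminf_{e\to\infty}\frac{\nu(p^e)}{p^e}\ \ge\ \operatorname{rank}^*P+2, \] where $\nu(p^e)=\max\{r\in\mathbb{N}\mid\mathfrak{m}^r\not\subseteq\mathfrak{m}^{[p^e]}\}$.
   Context: Let $P=\{p_1,\dots,p_N\}$ be a finite poset and $J(P)$ the set of poset ideals of $P$ (down-closed subsets, including $\emptyset$ and $P$). The Hibi ring is $\mathcal{R}_k[J(P)]=k[\,T\prod_{p_i\in I}X_i\mid I\in J(P)\,]\subseteq k[T,X_1,\dots,X_N]$, each generator in degree $1$; $\mathfrak{m}=R_+$ is generated by these generators; $\mathfrak{m}^{[q]}=(x^q\mid x\in\mathfrak{m})$. $x\lessdot y$ means $x<y$ with no $z$ satisfying $x<z<y$. A path is a sequence $C=(q_1,\dots,q_t)$ of distinct elements of $P$ with $q_1$ minimal in $P$, consecutive elements related by $q_i\lessdot q_{i+1}$ or $q_{i+1}\lessdot q_i$, and $q_{t-1}\lessdot q_t$ (when $t\ge2$); it is maximal if $q_t$ is maximal in $P$. For $1<i<t$, $q_i$ is locally maximal if $q_{i-1}\lessdot q_i$ and $q_{i+1}\lessdot q_i$, locally minimal if $q_i\lessdot q_{i-1}$ and $q_i\lessdot q_{i+1}$; $q_1$ counts as locally minimal and $q_t$ as locally maximal. The decomposition $C=A_1+D_1+\cdots+D_{n-1}+A_n$ splits $C$ into consecutive blocks: $A_1$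 is $q_1$ through the first locally maximal element, $D_1$ the following elements through the next locally minimal element, $A_2$ the following elements through the next locally maximal element, etc., $A_n$ ending at $q_t$; $t(A_i)$ is the last element of $A_i$, $V(\cdot)$ the set of elements of a block, $\langle A\rangle=\{q\in P\mid q\le t(A)\}$, and $\langle A_i\setminus t(A_i)\rangle$ the poset ideal generated by the elements of $A_i$ other than $t(A_i)$. $C$ satisfies ( * ) if for all $1\le i\le n-1$: (1) $V(D_i)\cap(\bigcup_{m=1}^{i-1}\langle A_m\rangle\cup\langle A_i\setminus t(A_i)\rangle\cup\{t(A_i)\})=\emptyset$; (2) $V(A_{i+1})\cap\bigcup_{m=1}^{i}\langle A_m\rangle=\emptyset$. $\operatorname{len}^*C=\#\{i\mid q_i\lessdot q_{i+1}\}$, and $\operatorname{rank}^*P$ is the maximum of $\operatorname{len}^*C$ over maximal paths $C$ satisfying ( * ). *)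

(* Defs.v *)
From HB Require Import structures.
From mathcomp Require Import all_boot all_order all_algebra.
From mathcomp Require Import mpoly.
From Stdlib Require Import ClassicalEpsilon.

Set Implicit Arguments.
Unset Strict Implicit.
Unset Printing Implicit Defensive.

Import Order.TTheory GRing.Theory.

Section Hibi.

Variable (k : fieldType) (d : Order.disp_t) (P : finPOrderType d).

(* Ambient polynomial ring k[T, X_p (p in P)]: variable 0 is T, variable
   (enum_rank x).+1 is X_x. *)
Definition nvars := #|P|.+1.
Definition Poly := {mpoly k[nvars]}.

Definition varT : Poly := 'X_(ord0 : 'I_nvars).
Definition varX (x : P) : Poly := 'X_(lift ord0 (enum_rank x)).

Definition poset_ideal (I : {set P}) : Prop :=
  forall x y : P, (y <= x)%O -> x \in I -> y \in I.

Definition hibi_gen (I : {set P}) : Poly := (varT * \prod_(x in I) varX x)%R.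

Inductive inHibi : Poly -> Prop :=
  | Hibi_const (c : k) : inHibi (c%:MP)%R
  | Hibi_gen (I : {set P}) : poset_ideal I -> inHibi (hibi_gen I)
  | Hibi_add f g : inHibi f -> inHibi g -> inHibi (f + g)%R
  | Hibi_mul f g : inHibi f -> inHibi g -> inHibi (f * g)%R.

Inductive in_ideal (S : Poly -> Prop) : Poly -> Prop :=
  | Ideal_zero : in_ideal S 0%R
  | Ideal_gen s : S s -> in_ideal S s
  | Ideal_add f g : in_ideal S f -> in_ideal S g -> in_ideal S (f + g)%R
  | Ideal_mul r f : inHibi r -> in_ideal S f -> in_ideal S (r * f)%R.

Definition max_ideal : Poly -> Prop :=
  in_ideal (fun g => exists I, poset_ideal I /\ g = hibi_gen I).

Definition max_ideal_pow (r : nat) : Poly -> Prop :=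
  in_ideal (fun g => exists fs : seq Poly,
     [/\ size fs = r, (forall f, f \in fs -> max_ideal f) & g = \prod_(f <- fs) f]%R).

Definition frob_pow (q : nat) : Poly -> Prop :=
  in_ideal (fun g => exists x, max_ideal x /\ g = (x ^+ q)%R).

Definition subideal (I J : Poly -> Prop) : Prop := forall f, I f -> J f.

Definition nu_pred (q r : nat) : Prop := ~ subideal (max_ideal_pow r) (frob_pow q).

Definition nu (q : nat) : nat :=
  epsilon (inhabits 0%N)
    (fun n => nu_pred q n /\ forall r, nu_pred q r -> (r <= n)%N).

Definition covers (x y : P) : bool :=
  ((x < y)%O && [forall z : P, ~~ ((x < z)%O && (z < y)%O)]).

Definition minimalP (x : P) : bool := [forall y : P, ~~ (y < x)%O].
Definition maximalP (x : P) : bool := [forall y : P, ~~ (x < y)%O].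

Definition is_path (C : seq P) : bool :=
  if C is q1 :: rest then
    [&& uniq C, minimalP q1,
        path (fun x y => covers x y || covers y x) q1 rest
      & last true (pairmap covers q1 rest)]  (* q_{t-1} <. q_t *)
  else false.

Definition is_maximal_path (C : seq P) : bool :=
  if C is q1 :: rest then is_path C && maximalP (last q1 rest) else false.

(* split into maximal runs of up-steps / down-steps:
   the blocks are A_1, D_1, A_2, ..., D_{n-1}, A_n *)
Fixpoint runs (dir : bool) (prev : P) (s : seq P) (cur : seq P) : seq (seq P) :=
  match s with
  | [::] => [:: cur]
  | x :: s' =>
      if covers prev x == dir then runs dir x s' (rcons cur x)
      else cur :: runs (covers prev x) x s' [:: x]
  end.

Definition blocks (C : seq P) : seq (seq P) :=
  if C is q1 :: rest then runs true q1 rest [:: q1] else [::].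

Definition nA (C : seq P) : nat := (size (blocks C)).+1 %/ 2.
(* 0-indexed: A i = A_{i+1}, D i = D_{i+1} *)
Definition blockA (C : seq P) (i : nat) : seq P := nth [::] (blocks C) i.*2.
Definition blockD (C : seq P) (i : nat) : seq P := nth [::] (blocks C) i.*2.+1.

Definition tB (x0 : P) (A : seq P) : P := last x0 A.

Definition genA (x0 : P) (A : seq P) : {set P} := [set q | (q <= tB x0 A)%O].

Definition genA_minus_t (A : seq P) : {set P} :=
  [set q | has (fun a => (q <= a)%O) (take (size A).-1 A)].

Definition star_cond (C : seq P) : bool :=
  if C is q1 :: _ then
    [forall i : 'I_(nA C).-1,
       let V_D := [set x in blockD C i] in
       let V_A' := [set x in blockA C i.+1] in
       let U := \bigcup_(m < i) genA q1 (blockA C m) in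
       [&& V_D :&: (U :|: genA_minus_t (blockA C i)
                      :|: [set tB q1 (blockA C i)]) == set0
         & V_A' :&: (U :|: genA q1 (blockA C i)) == set0]]
  else false.

Definition len_star (C : seq P) : nat :=
  if C is q1 :: rest then count id (pairmap covers q1 rest) else 0.

(* rank^* P : max of len^* over maximal paths satisfying condition star; paths are
   duplicate-free so they have at most #|P| elements. *)
Definition rank_star : nat :=
  \max_(n < #|P|.+1) \max_(t : n.-tuple P | is_maximal_path t && star_cond t)
     len_star t.

End Hibi.

Definition liminf_ge (a : nat -> rat) (c : rat) : Prop :=
  forall eps : rat, (0 < eps)%R ->
    exists E : nat, forall e : nat, (E <= e)%N -> (c - eps <= a e)%R.

(* Main.v *)
Require Import Defs.
From HB Require Import structures.
From mathcomp Require Import all_boot all_order all_algebra mpoly.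
From mathcomp Require Import zify lra.
From Stdlib Require Import ClassicalEpsilon Classical.

Set Implicit Arguments.
Unset Strict Implicit.
Unset Printing Implicit Defensive.
Import Order.TTheory.

Section DD.
Variables (d : Order.disp_t) (P : finPOrderType d).

Fixpoint labs (dir : bool) (prev : P) (s : seq P) : seq nat :=
  match s with
  | [::] => [::]
  | x :: s' => if covers prev x == dir then 0 :: labs dir x s'
               else 1 :: map S (labs (covers prev x) x s')
  end.

Lemma size_labs dir prev s : size (labs dir prev s) = size s.
Proof.
elim: s dir prev => [|x s ih] dir prev //=.
by case: ifP => _ /=; rewrite ?size_map ih.
Qed.

Lemma mask_S0 (T : Type) (L : seq nat) (s : seq T) :
  mask [seq l == 0 | l <- map S L] s = [::].
Proof. by elim: L s => [|l L ih] [|x s] //=. Qed.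

Lemma map_eqS (L : seq nat) kk :
  [seq l == kk.+1 | l <- map S L] = [seq l == kk | l <- L].
Proof. by elim: L => [|l L ih] //=; rewrite ih eqSS. Qed.

Lemma runs_nth dir prev s cur kk :
  nth [::] (runs dir prev s cur) kk =
  (if kk == 0 then cur else [::]) ++ mask [seq l == kk | l <- labs dir prev s] s.
Proof.
elim: s dir prev cur kk => [|x s ih] dir prev cur kk /=.
  by case: kk => [|[]] //=; rewrite cats0.
case: ifP => hc /=.
  rewrite ih; case: kk => [|kk] //=.
  by rewrite cat_rcons.
case: kk => [|kk] /=; first by rewrite mask_S0 cats0.
by rewrite ih map_eqS; case: kk.
Qed.

Lemma labs_step dir prev s i x0 : i < size s ->
  covers (nth x0 (prev :: s) i) (nth x0 s i) = dir (+) odd (nth 0 (labs dir prev s) i).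
Proof.
elim: s dir prev i => [|x s ih] dir prev i //=.
case: ifP => hc; case: i => [|i] /= hi.
- by rewrite addbF; apply/eqP.
- by apply: ih.
- by rewrite addbT; move: hc; case: (covers prev x); case: dir.
- rewrite (ih (covers prev x)) // (nth_map 0) ?size_labs //=.
  move: (odd _) => o.
  by move: hc; case: (covers prev x); case: dir; case: o.
Qed.

Lemma labs_mono dir prev s i : i.+1 < size s ->
  nth 0 (labs dir prev s) i <= nth 0 (labs dir prev s) i.+1.
Proof.
elim: s dir prev i => [|x s ih] dir prev i //=.
case: ifP => hc; case: i => [|i] /= hi //.
- by rewrite ih.
- by rewrite (nth_map 0) ?size_labs //; case: (s) hi.
- rewrite !(nth_map 0) ?size_labs; try lia.
  by rewrite ltnS ih.
Qed.

Lemma runs_sorted dir (prev : P) s cur : cur != [::] -> last prev cur = prev ->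
  sorted (fun x y : P => covers x y == dir) cur ->
  forall kk, sorted (fun x y : P => covers x y == dir (+) odd kk) (nth [::] (runs dir prev s cur) kk).
Proof.
elim: s dir prev cur => [|x s ih] dir prev cur hne hl hs kk /=.
  by case: kk => [|[]] //=; rewrite addbF.
case: ifP => hc.
  apply: ih; first by case: (cur).
    by rewrite last_rcons.
  case: cur hne hl hs => [//|c0 c'] _ /= hl hs.
  by rewrite rcons_path hs /= hl hc.
case: kk => [|kk] /=; first by rewrite addbF.
have := ih (covers prev x) x [:: x] isT erefl isT kk.
apply: sub_sorted => y z /=.
clear -hc; move: (covers y z) => cyz.
by move: hc; case: (covers prev x); case: dir; case: (odd kk).
Qed.

Lemma covers_lt (x y : P) : covers x y -> (x < y)%O.
Proof. by case/andP. Qed.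

Lemma chain_le_last (x0 : P) (s : seq P) : sorted (@covers d P) s ->
  forall y, y \in s -> (y <= last x0 s)%O.
Proof.
case: s => [//|z s] /=.
elim: s z => [|w s ih] z /=.
  by move=> _ y; rewrite inE => /eqP ->.
move=> /andP[hzw hp] y; rewrite inE => /orP[/eqP ->|hy]; last exact: ih.
apply: le_trans (ltW (covers_lt hzw)) _; apply: ih => //; exact: mem_head.
Qed.

Lemma take_last (T : eqType) (x0 x : T) s : x \in s -> x != last x0 s ->
  x \in take (size s).-1 s.
Proof.
case: s => [//|z s] hx hne.
have e : take (size (z :: s)).-1 (z :: s) = belast z s.
  by rewrite lastI size_rcons /= -cats1 take_size_cat.
rewrite e; move: hx hne; rewrite lastI mem_rcons inE last_rcons.
by case/orP => [/eqP->|//]; rewrite eqxx.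
Qed.

Lemma mem_mask_nth (T : eqType) (m : bitseq) (s : seq T) x0 p :
  p < size s -> size m = size s -> nth false m p -> nth x0 s p \in mask m s.
Proof.
elim: s m p => [|x s ih] [|b m] [|p] //= hp [hm]; first by move=> ->; rewrite mem_head.
by move=> hb; case: b; rewrite ?inE ih ?orbT.
Qed.

Lemma mask_nthP (T : eqType) (m : bitseq) (s : seq T) x0 x :
  x \in mask m s -> exists2 p, p < size s & nth false m p /\ x = nth x0 s p.
Proof.
elim: s m => [|y s ih] [|b m] //=.
case: b.
  rewrite inE => /orP[/eqP->|/ih[p hp [h1 h2]]]; first by exists 0.
  by exists p.+1.
by move/ih => [p hp [h1 h2]]; exists p.+1.
Qed.

End DD.

Lemma ar1 m i' : (m.*2).+2 <= i'.*2.+1 -> m < i'.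
Proof. rewrite -!muln2; lia. Qed.
Lemma ar2 x h : x.+2 <= h.*2 -> 0 < h.
Proof. rewrite -!muln2; lia. Qed.
Lemma ar3 m h : (m.*2).+2 <= h.*2 -> m <= h.-1.
Proof. rewrite -!muln2; lia. Qed.
Lemma ar4 h : 0 < h -> (h.-1).*2.+1 <= h.*2.
Proof. rewrite -!muln2; lia. Qed.
Lemma ar_bnd S z lj i' : z < S -> lj <= z -> z = z./2.*2 -> i'.*2.+1 <= lj ->
  i' < (S.+1 %/ 2).-1.
Proof. move=> h1 h2 h3 h4; rewrite -!muln2 in h3 h4; lia. Qed.

Section EE.
Variables (d : Order.disp_t) (P : finPOrderType d).
Variables (q1 : P) (rest : seq P).
Hypothesis hpath : path (fun x y => covers x y || covers y x) q1 rest.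
Hypothesis hlast : last true (pairmap (@covers d P) q1 rest).
Hypothesis hstar : star_cond (q1 :: rest).

Local Notation C := (q1 :: rest).
Local Notation t := (size rest).+1.
Local Notation L := (labs true q1 rest).
Local Notation lab := (0 :: L).
Local Notation c p := (nth q1 C p).
Local Notation l p := (nth 0 lab p).

Lemma size_lab : size lab = t.
Proof. by rewrite /= size_labs. Qed.

Lemma blocks_nth kk : nth [::] (blocks C) kk = mask [seq x == kk | x <- lab] C.
Proof. by rewrite /blocks runs_nth; case: kk. Qed.

Lemma step_lab p : p.+1 < t -> covers (c p) (c p.+1) = ~~ odd (l p.+1).
Proof. by move=> hp; rewrite /= (labs_step true) // addTb. Qed.

Lemma step_either p : p.+1 < t -> covers (c p) (c p.+1) || covers (c p.+1) (c p).
Proof. by move=> hp; move/pathP: hpath => /(_ q1 p hp). Qed.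

Lemma lab_mono1 p : p.+1 < t -> l p <= l p.+1.
Proof. by case: p => [//|p] hp /=; apply: labs_mono. Qed.

Lemma lab_mono i j : i <= j -> j < t -> l i <= l j.
Proof.
elim: j => [|j ih]; first by rewrite leqn0 => /eqP->.
rewrite leq_eqVlt => /orP[/eqP->//|hij] hj.
by apply: leq_trans (ih hij (ltnW hj)) (lab_mono1 hj).
Qed.

Lemma mem_blk p : p < t -> c p \in nth [::] (blocks C) (l p).
Proof.
move=> hp; rewrite blocks_nth; apply: mem_mask_nth => //.
  by rewrite size_map size_lab.
by rewrite (nth_map 0) ?size_lab.
Qed.

Lemma blk_pos x kk : x \in nth [::] (blocks C) kk -> exists2 p, p < t & l p = kk /\ x = c p.
Proof.
rewrite blocks_nth => /(mask_nthP q1) [p hp [h1 h2]].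
exists p => //; split => //.
by move: h1; rewrite (nth_map 0) ?size_lab // => /eqP.
Qed.

Lemma size_blocks p : p < t -> l p < size (blocks C).
Proof.
move=> hp; have := mem_blk hp; rewrite ltnNge; apply: contraL => h.
by rewrite (nth_default [::] h).
Qed.

Lemma blk_sorted m : sorted (@covers d P) (nth [::] (blocks C) m.*2).
Proof.
have := @runs_sorted d P true q1 rest [:: q1] isT erefl isT m.*2.
rewrite odd_double addbF; apply: sub_sorted => x y /=.
by move/eqP.
Qed.

Lemma last_even : ~~ odd (l (size rest)).
Proof.
have [E|ne] := eqVneq rest [::]; first by rewrite E.
have hn : size rest = (size rest).-1.+1 by rewrite prednK // lt0n size_eq0.
have hs : (size rest).-1.+1 < t by rewrite -hn.
have := hlast; rewrite -nth_last size_pairmap (nth_pairmap q1); last first.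
  by rewrite {2}hn.
by move=> h; rewrite hn -(step_lab hs) /=.
Qed.

Lemma len_star_lab : len_star C = count (fun x => ~~ odd x) L.
Proof.
rewrite /len_star.
have -> : pairmap (@covers d P) q1 rest = map (fun x => ~~ odd x) L.
  apply: (@eq_from_nth _ true); first by rewrite size_pairmap size_map size_labs.
  move=> i; rewrite size_pairmap => hi.
  by rewrite (nth_pairmap q1) // (nth_map 0) ?size_labs // (labs_step true) // addTb.
by rewrite count_map.
Qed.

Lemma chain_pos i j : i < j -> j < t -> (forall r, i < r <= j -> ~~ odd (l r)) ->
  (c i < c j)%O.
Proof.
elim: j => [//|j ih] hij hjt hr.
have st : (c j < c j.+1)%O.
  by apply: covers_lt; rewrite step_lab //; apply: hr; rewrite hij leqnn.
rewrite ltnS leq_eqVlt in hij; case/orP: hij => [/eqP->//|hij].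
apply: lt_trans st; apply: ih => //; first exact: ltnW.
by move=> r /andP[h1 h2]; apply: hr; rewrite h1 /=; apply: leq_trans h2 _.
Qed.


Lemma half_even n : ~~ odd n -> n = n./2.*2.
Proof. by move=> h; rewrite -{1}(odd_double_half n) (negbTE h). Qed.

Lemma half_odd n : odd n -> n = n./2.*2.+1.
Proof. by move=> h; rewrite -{1}(odd_double_half n) h add1n. Qed.

Lemma core i j : i < j -> j < t -> ~~ odd (l i) -> (c j <= c i)%O ->
  forall r, i < r <= j -> odd (l r).
Proof.
move=> hij hjt hi hji r /andP[hir hrj].
case: (boolP (odd (l r))) => // hr; exfalso.
have hit : i < t by apply: ltn_trans hjt.
have hrt : r < t by apply: leq_ltn_trans hjt.
set m := (l i)./2.
have him : l i = m.*2 by apply: half_even.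
set B := nth [::] (blocks C) (l i).
have ciB : c i \in B by apply: mem_blk.
have sB : sorted (@covers d P) B by rewrite /B him; apply: blk_sorted.
have tle : (c i <= last q1 B)%O := chain_le_last q1 sB ciB.
have BA : B = blockA C m by rewrite /blockA /B him.
move: hstar; rewrite /star_cond => /forallP hs.
have lle : l (size rest) < size (blocks C) by apply: size_blocks.
have lje : l j <= l (size rest) by apply: lab_mono.
have lev := half_even last_even.
have bnd : forall i', i'.*2.+1 <= l j -> i' < (nA C).-1.
  by move=> i' hi'; rewrite /nA; apply: ar_bnd lle lje lev hi'.
have lir : l i <= l r by apply: lab_mono => //; apply: ltnW.
have lrj : l r <= l j by apply: lab_mono.
have [e|ne] := eqVneq (l j) (l i).
  have : (c i < c j)%O.
    apply: chain_pos => // r' /andP[h1 h2].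
    have : l i <= l r' <= l j by rewrite !lab_mono // ?(ltnW h1) //; apply: leq_ltn_trans hjt.
    by rewrite e -eqn_leq => /eqP <-.
  by move=> /lt_le_trans /(_ hji); rewrite ltxx.
have [e1|ne1] := eqVneq (l j) (l i).+1.
  have lri : l r = l i.
    have : l r <= (l i).+1 by rewrite -e1.
    rewrite leq_eqVlt ltnS => /orP[/eqP e2|h3]; first by move: hr; rewrite e2 /= hi.
    by apply/eqP; rewrite eqn_leq h3 lir.
  have cir : (c i < c r)%O.
    apply: chain_pos => // r' /andP[h1 h2].
    have : l i <= l r' <= l r.
      by rewrite !lab_mono // ?(ltnW h1) //; apply: leq_ltn_trans hrt.
    by rewrite lri -eqn_leq => /eqP <-.
  have crB : c r \in B by rewrite /B -lri; apply: mem_blk.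
  have ne2 : c i != last q1 B.
    apply/eqP => e2; have := chain_le_last q1 sB crB; rewrite -e2.
    by move/(lt_le_trans cir); rewrite ltxx.
  have ciT := take_last ciB ne2.
  have bm : m.*2.+1 <= l j by rewrite e1 him.
  move: (hs (Ordinal (bnd m bm))) => /= /andP[h1 _].
  move/eqP: h1 => h1.
  have : c j \in set0.
    rewrite -h1 !inE.
    have -> : blockD C m = nth [::] (blocks C) (l j) by rewrite /blockD e1 him.
    rewrite mem_blk //= -BA.
    by apply/orP; left; apply/orP; right; apply/hasP; exists (c i).
  by rewrite inE.
have big2 : (l i).+2 <= l j.
  by move: (lab_mono (ltnW hij) hjt) ne ne1; rewrite leq_eqVlt => /orP[/eqP->|]; [rewrite eqxx|rewrite leq_eqVlt eq_sym => /orP[->|//]].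
have cjT : c j \in genA q1 (blockA C m).
  by rewrite /genA inE /tB -BA; apply: le_trans tle.
case: (boolP (odd (l j))) => oj.
  set i' := (l j)./2.
  have hj' := half_odd oj.
  have mi : m < i' by apply: ar1; rewrite -hj' -him.
  have bm : i'.*2.+1 <= l j by rewrite -hj'.
  move: (hs (Ordinal (bnd i' bm))) => /= /andP[h1 _].
  move/eqP: h1 => h1.
  have : c j \in set0.
    rewrite -h1 !inE.
    have -> : blockD C i' = nth [::] (blocks C) (l j) by rewrite /blockD -hj'.
    rewrite mem_blk //=.
    by apply/orP; left; apply/orP; left; apply/bigcupP; exists (Ordinal mi).
  by rewrite inE.
set h := (l j)./2.
have hj' := half_even oj.
have hpos : 0 < h by apply: (@ar2 (l i)); rewrite -hj'.
have mi : m <= h.-1 by apply: ar3; rewrite -hj' -him.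
have bm : (h.-1).*2.+1 <= l j by rewrite hj'; apply: ar4.
move: (hs (Ordinal (bnd h.-1 bm))) => /= /andP[_ h2].
move/eqP: h2 => h2.
have : c j \in set0.
  rewrite -h2 !inE.
  have -> : blockA C h.-1.+1 = nth [::] (blocks C) (l j) by rewrite /blockA prednK // -hj'.
  rewrite mem_blk //=.
  move: mi; rewrite leq_eqVlt => /orP[/eqP <-|mi].
    by apply/orP; right; move: cjT; rewrite inE.
  by apply/orP; left; apply/bigcupP; exists (Ordinal mi).
by rewrite inE.
Qed.
End EE.

Section FF.
Variables (k : fieldType) (d : Order.disp_t) (P : finPOrderType d).
Variables (q1 : P) (rest : seq P).
Hypothesis hpath : path (fun x y => covers x y || covers y x) q1 rest.
Hypothesis hlast : last true (pairmap (@covers d P) q1 rest).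
Hypothesis hstar : star_cond (q1 :: rest).

Local Notation C := (q1 :: rest).
Local Notation t := (size rest).+1.
Local Notation L := (labs true q1 rest).
Local Notation lab := (0 :: L).
Local Notation c p := (nth q1 C p).
Local Notation l p := (nth 0 lab p).

Definition lev r := count (fun x => ~~ odd x) (take r.+1 lab).

Lemma lev0 : lev 0 = 1.
Proof. by rewrite /lev /= take0. Qed.

Lemma lev_succ r : r.+1 < t -> lev r.+1 = lev r + ~~ odd (l r.+1).
Proof.
move=> hr; rewrite /lev (take_nth 0) ?size_lab // -cats1 count_cat /=.
by rewrite addn0.
Qed.

Lemma lev_mono i j : i <= j -> j < t -> lev i <= lev j.
Proof.
elim: j => [|j ih]; first by rewrite leqn0 => /eqP->.
rewrite leq_eqVlt => /orP[/eqP->//|hij] hj.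
by rewrite lev_succ //; apply: leq_trans (ih hij (ltnW hj)) (leq_addr _ _).
Qed.

Lemma lev_last : lev (size rest) = (len_star C).+1.
Proof.
rewrite /lev take_oversize ?size_lab // (len_star_lab q1 rest) /=.
by rewrite add1n.
Qed.

Lemma lev_core i j : i < j -> j < t -> ~~ odd (l i) -> (c j <= c i)%O -> lev j = lev i.
Proof.
move=> hij hjt hi hji.
have ho := core hlast hstar hij hjt hi hji.
suff: forall j', i <= j' <= j -> lev j' = lev i.
  by apply; rewrite (ltnW hij) leqnn.
elim => [|j' ih]; first by rewrite leqn0 => /andP[/eqP->].
case/andP => h1 h2; rewrite leq_eqVlt in h1; case/orP: h1 => [/eqP <- //|h1].
have hj' : j'.+1 < t by apply: leq_ltn_trans h2 hjt.
have o : odd (l j'.+1) by apply: ho; rewrite h1 h2.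
rewrite lev_succ // o addn0 ih //.
by rewrite -ltnS h1 ltnW.
Qed.

Local Notation LL := (len_star C).

Definition lam (y : P) := \max_(r < t | (c r <= y)%O) lev r.

Lemma lam_le y : lam y <= LL.+1.
Proof.
apply/bigmax_leqP => r _; rewrite -lev_last; apply: lev_mono => //.
by rewrite -ltnS.
Qed.

Lemma lam_ge r y : r < t -> (c r <= y)%O -> lev r <= lam y.
Proof. by move=> hr hy; apply: (@leq_bigmax_cond _ _ _ (Ordinal hr)). Qed.

Lemma lam_mono y y' : (y <= y')%O -> lam y <= lam y'.
Proof.
move=> h; apply/bigmax_leqP => r hr; apply: lam_ge => //.
exact: le_trans h.
Qed.

Lemma lam_A r : r < t -> ~~ odd (l r) -> lam (c r) = lev r.
Proof.
move=> hr ho; apply/eqP; rewrite eqn_leq lam_ge // andbT.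
apply/bigmax_leqP => r' hr'.
have [h|h] := leqP r' r; first by apply: lev_mono.
by rewrite (lev_core h).
Qed.

Lemma crossing (f : nat -> bool) n : f 0 -> ~~ f n -> exists2 p, p < n & f p && ~~ f p.+1.
Proof.
elim: n => [->//|n ih] h0 hn.
case: (boolP (f n)) => hfn; first by exists n => //; rewrite hfn.
by have [p hp hh] := ih h0 hfn; exists p => //; apply: ltnW.
Qed.

Section Wit.
Variables (q : nat).
Hypothesis q0 : 0 < q.
Local Notation Q := q.-1.
Local Notation a := (Q * LL.+2).
Definition bb (y : P) := a - Q * lam y.

Lemma bb_le x : bb x <= a.
Proof. exact: leq_subr. Qed.

Lemma bb_mono x y : (y <= x)%O -> bb x <= bb y.
Proof. by move=> h; rewrite /bb leq_sub2l // leq_mul2l lam_mono ?orbT. Qed.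

Lemma path_contra (I : {set P}) (MT : nat) (MX : P -> nat) :
  poset_ideal I -> a = q + MT -> (forall x, bb x = (x \in I) * q + MX x) ->
  (forall x, MX x <= MT) -> (forall x y, (y <= x)%O -> MX x <= MX y) -> False.
Proof.
move=> hI haT hbX hXT hXo.
have aQ : forall z, z <= LL.+2 -> Q * z <= a by move=> z hz; rewrite leq_mul2l hz orbT.
have hq : q = Q.+1 by rewrite prednK.
have c0I : c 0 \in I.
  apply/negPn/negP => h; have := hbX (c 0); rewrite (negbTE h) mul0n add0n.
  have := hXT (c 0); rewrite /bb lam_A // lev0 muln1 => h1 h2.
  move: haT h1 h2; move: (MX _) (Q * _) hq => M A hq.
  lia.
have cLI : c (size rest) \notin I.
  apply/negP => h; have := hbX (c (size rest)); rewrite h mul1n.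
  rewrite /bb lam_A // ?last_even // lev_last.
  have : Q * LL.+2 = Q * LL.+1 + Q by rewrite mulnS addnC.
  move: (Q * LL.+2) (Q * LL.+1) (MX _) hq => A X M hq.
  lia.
have [p hp /andP[hpI hp1I]] := @crossing (fun r => c r \in I) (size rest) c0I cLI.
have hp1 : p.+1 < t by rewrite ltnS.
case: (boolP (odd (l p.+1))) => o.
  have := step_either hpath hp1; rewrite step_lab // o /= => cv.
  by move: hp1I; rewrite (hI _ _ (ltW (covers_lt cv)) hpI).
have cv : covers (c p) (c p.+1) by rewrite step_lab.
have le1 := hXo _ _ (ltW (covers_lt cv)).
have := hbX (c p); have := hbX (c p.+1); rewrite hpI (negbTE hp1I) mul1n mul0n add0n.
rewrite /bb (lam_A hp1) // lev_succ // o addn1.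
have h3 : lev p <= lam (c p) by apply: lam_ge => //; apply: ltnW.
have h4 : Q * lev p <= Q * lam (c p) by rewrite leq_mul2l h3 orbT.
have h5 : Q * (lev p).+1 <= a.
  apply: aQ; have := lam_le (c p.+1); rewrite (lam_A hp1) // lev_succ // o addn1.
  by move=> h; apply: leq_trans h _.
have h6 : Q * (lev p).+1 = Q * lev p + Q by rewrite mulnS addnC.
move: h4 h5 h6 le1; move: (Q * lam _) (Q * (lev p).+1) (Q * lev p) (MX (c p)) (MX (c p.+1)) => Y Z X M1 M2.
move: (Q * _) hq => A hq.
lia.
Qed.
End Wit.
End FF.

Import GRing.Theory.

Section Alg.
Variables (k : fieldType) (d : Order.disp_t) (P : finPOrderType d).
Local Notation Poly := (Defs.Poly k P).
Local Notation n := (nvars P).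
Local Notation mnm := ('X_{1..n}).

Definition iT : 'I_n := ord0.
Definition iX (x : P) : 'I_n := lift ord0 (enum_rank x).

Lemma iX_neqT x : (iX x == iT) = false.
Proof. by apply/negbTE; rewrite /iX /iT eq_sym neq_lift. Qed.

Lemma iX_eq x y : (iX y == iX x) = (y == x).
Proof.
apply/eqP/eqP => [/lift_inj/enum_rank_inj|->] //.
Qed.

Definition eI (I : {set P}) : mnm := (U_(iT) + \sum_(x in I) U_(iX x))%MM.

Lemma eIT I : eI I iT = 1%N.
Proof.
rewrite /eI mnmDE mnm_sumE mnm1E eqxx big1 // => x _.
by rewrite mnm1E iX_neqT.
Qed.

Lemma eIX I x : eI I (iX x) = (x \in I).
Proof.
rewrite /eI mnmDE mnm_sumE mnm1E (eq_sym iT) iX_neqT add0n.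
case: (boolP (x \in I)) => xI.
  rewrite (bigD1 x) //= mnm1E eqxx big1 // => y /andP[_ yx].
  by rewrite mnm1E iX_eq (negbTE yx).
rewrite big1 // => y yI; rewrite mnm1E iX_eq.
by case: eqP => // yx; move: xI; rewrite -yx yI.
Qed.

Lemma hibi_genE I : hibi_gen k I = 'X_[eI I].
Proof.
rewrite /hibi_gen /varT /varX /eI mpolyXD.
congr (_ * _)%R.
by rewrite (big_morph (fun m : mnm => 'X_[m] : Poly) (@mpolyXD _ _) (@mpolyX0 _ _)).
Qed.

Definition Sgood (m : mnm) : Prop :=
  (forall x, m (iX x) <= m iT) /\
  (forall x y, (y <= x)%O -> m (iX x) <= m (iX y)).

Lemma Sgood0 : Sgood 0%MM.
Proof. by split => *; rewrite !mnm0E. Qed.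

Lemma SgoodD m1 m2 : Sgood m1 -> Sgood m2 -> Sgood (m1 + m2)%MM.
Proof.
move=> [h1 h2] [h3 h4]; split => [x|x y yx]; rewrite !mnmDE.
  by rewrite leq_add.
by rewrite leq_add // ?h2 ?h4.
Qed.

Lemma Sgood_eI I : poset_ideal I -> Sgood (eI I).
Proof.
move=> hI; split => [x|x y yx]; rewrite ?eIX ?eIT; first by case: (x \in I).
by case xI: (x \in I) => //; rewrite (hI x y yx xI).
Qed.

Definition SR (f : Poly) : Prop := forall m, m \in msupp f -> Sgood m.

Lemma inHibi_SR f : inHibi f -> SR f.
Proof.
elim => [c|I hI|f1 g _ hf _ hg|f1 g _ hf _ hg] m.
- rewrite msuppC; case: (c == 0)%R => //; rewrite mem_seq1 => /eqP ->.
  exact: Sgood0.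
- by rewrite hibi_genE msuppX mem_seq1 => /eqP ->; apply: Sgood_eI.
- by move/msuppD_le; rewrite mem_cat => /orP[/hf|/hg].
- move/msuppM_le => /allpairsP[[m1 m2] [/= /hf h1 /hg h2 ->]].
  exact: SgoodD.
Qed.

Definition Phi (q : nat) (m : mnm) : Prop :=
  exists I, poset_ideal I /\ exists m', Sgood m' /\ m = (eI I *+ q + m')%MM.

Definition Good (q : nat) (f : Poly) : Prop := forall m, m \in msupp f -> Phi q m.

Lemma Good0 q : Good q 0%R.
Proof. by move=> m; rewrite msupp0. Qed.

Lemma GoodD q f g : Good q f -> Good q g -> Good q (f + g)%R.
Proof. by move=> hf hg m /msuppD_le; rewrite mem_cat => /orP[/hf|/hg]. Qed.

Lemma GoodM q r f : SR r -> Good q f -> Good q (r * f)%R.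
Proof.
move=> hr hf m /msuppM_le /allpairsP[[m1 m2] [/= /hr h1 /hf h2 ->]].
case: h2 => I [hI [m' [hm' ->]]]; exists I; split => //.
exists (m1 + m')%MM; split; first exact: SgoodD.
by apply/mnmP => i; rewrite !mnmDE; lia.
Qed.

Lemma inHibi1 : inHibi (1%R : Poly).
Proof. by have := @Hibi_const k d P 1%R; rewrite mpolyC1. Qed.

Lemma inHibiX (r : Poly) i : inHibi r -> inHibi (r ^+ i)%R.
Proof.
move=> hr; elim: i => [|i ih]; first by rewrite expr0; apply: inHibi1.
by rewrite exprS; apply: Hibi_mul.
Qed.

Section Frob.
Variables (p e : nat).
Hypothesis hp : p \in [pchar k]%R.
Local Notation q := (p ^ e).

Lemma pchar_Poly : (GRing.pchar Poly).-nat q.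
Proof.
have pp : prime p := pcharf_prime hp.
rewrite pnatX (pnatE _ pp); apply/orP; left.
by rewrite (pchar_lalg Poly).
Qed.

Lemma frob_gen x : max_ideal x -> Good q (x ^+ q)%R.
Proof.
have q0 : 0 < q by rewrite expn_gt0 prime_gt0 // (pcharf_prime hp).
elim => [|g [I [hI ->]]|f g _ hf _ hg|r f hr _ hf].
- by rewrite expr0n gtn_eqF //; apply: Good0.
- rewrite hibi_genE mpolyXn => m; rewrite msuppX mem_seq1 => /eqP ->.
  exists I; split => //; exists 0%MM; split; first exact: Sgood0.
  by rewrite addm0.
- by rewrite exprDn_pchar ?pchar_Poly //; apply: GoodD.
- rewrite exprMn; apply: GoodM => //; apply: inHibi_SR; exact: inHibiX.
Qed.

Lemma frob_Good f : frob_pow q f -> Good q f.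
Proof.
elim => [|g [x [hx ->]]|f1 f2 _ h1 _ h2|r f1 hr _ h1].
- exact: Good0.
- exact: frob_gen.
- exact: GoodD.
- by apply: GoodM => //; apply: inHibi_SR.
Qed.
End Frob.

End Alg.

Section BB.
Variables (k : fieldType) (d : Order.disp_t) (P : finPOrderType d).
Local Notation Poly := (Defs.Poly k P).
Local Notation n := (nvars P).
Local Notation mnm := ('X_{1..n}).

Lemma sum_lt a c : \sum_(0 <= j < a) (j < c) = minn a c.
Proof.
elim: a => [|a ih]; first by rewrite big_geq // min0n.
rewrite big_nat_recr //= ih.
by case: (ltnP a c) => h /=; lia.
Qed.

Section Wit.
Variables (b : P -> nat) (a : nat).
Hypothesis hba : forall x, b x <= a.
Hypothesis hbo : forall x y, (y <= x)%O -> b x <= b y.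

Definition Ij (j : nat) : {set P} := [set x | j < b x].

Lemma Ij_ideal j : poset_ideal (Ij j).
Proof.
move=> x y yx; rewrite !inE => h; exact: leq_trans h (hbo yx).
Qed.

Definition m0 : mnm := \sum_(0 <= j < a) eI (Ij j).

Lemma m0T : m0 (iT P) = a.
Proof.
rewrite /m0 mnm_sumE (eq_bigr (fun _ => 1%N)) ?sum_nat_const_nat ?muln1 ?subn0 //.
by move=> j _; rewrite eIT.
Qed.

Lemma m0X x : m0 (iX x) = b x.
Proof.
rewrite /m0 mnm_sumE (eq_bigr (fun j => (j < b x) : nat)).
  by rewrite sum_lt; have := hba x; lia.
by move=> j _; rewrite eIX inE.
Qed.

Lemma wit_pow : max_ideal_pow a ('X_[m0] : Poly).
Proof.
apply: Ideal_gen; exists [seq hibi_gen k (Ij j) | j <- index_iota 0 a].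
split.
- by rewrite size_map size_iota subn0.
- move=> f /mapP[j _ ->]; apply: Ideal_gen; exists (Ij j); split => //.
  exact: Ij_ideal.
- rewrite big_map /m0.
  rewrite (big_morph (fun m : mnm => 'X_[m] : Poly) (@mpolyXD _ _) (@mpolyX0 _ _)).
  by apply: eq_bigr => j _; rewrite hibi_genE.
Qed.

Lemma wit_Phi q : Good q ('X_[m0] : Poly) -> Phi q m0.
Proof. by move/(_ m0); rewrite msuppX mem_seq1 eqxx; apply. Qed.
End Wit.
End BB.

Section CC.
Variables (k : fieldType) (d : Order.disp_t) (P : finPOrderType d).
Local Notation Poly := (Defs.Poly k P).

Definition G (r : nat) (g : Poly) : Prop :=
  exists Is : seq {set P}, [/\ size Is = r, (forall I, I \in Is -> poset_ideal I)
     & g = \prod_(I <- Is) hibi_gen k I]%R.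

Lemma in_ideal_mono (S S' : Poly -> Prop) f :
  (forall g, S g -> in_ideal S' g) -> in_ideal S f -> in_ideal S' f.
Proof.
move=> hS; elim => [|g /hS //|f1 g _ h1 _ h2|r f1 hr _ h1].
- exact: Ideal_zero.
- exact: Ideal_add.
- exact: Ideal_mul.
Qed.

Lemma mulG r (f h : Poly) : max_ideal f -> in_ideal (G r) h -> in_ideal (G r.+1) (f * h)%R.
Proof.
move=> hf; elim: hf h => [|g [I [hI ->]]|f1 f2 _ h1 _ h2|r' f1 hr _ h1] h hh.
- by rewrite mul0r; apply: Ideal_zero.
- elim: hh => [|g' [Is [hs hIs ->]]|u v _ hu _ hv|r'' u hr _ hu].
  + by rewrite mulr0; apply: Ideal_zero.
  + apply: Ideal_gen; exists (I :: Is); split; first by rewrite /= hs.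
      by move=> J; rewrite inE => /orP[/eqP->|/hIs].
    by rewrite big_cons.
  + by rewrite mulrDr; apply: Ideal_add.
  + by rewrite mulrCA; apply: Ideal_mul.
- by rewrite mulrDl; apply: Ideal_add; [apply: h1|apply: h2].
- by rewrite -mulrA; apply: Ideal_mul => //; apply: h1.
Qed.

Lemma prodG (fs : seq Poly) : (forall f, f \in fs -> max_ideal f) ->
  in_ideal (G (size fs)) (\prod_(f <- fs) f)%R.
Proof.
elim: fs => [|f fs ih] hfs.
  by rewrite big_nil; apply: Ideal_gen; exists [::]; split => //; rewrite big_nil.
rewrite big_cons /=; apply: mulG; first by apply: hfs; rewrite inE eqxx.
by apply: ih => g hg; apply: hfs; rewrite inE hg orbT.
Qed.

Lemma pow_sub_G r f : max_ideal_pow r f -> in_ideal (G r) f.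
Proof.
apply: in_ideal_mono => g [fs [hs hfs ->]]; rewrite -hs; exact: prodG.
Qed.

Lemma size_count (T : finType) (s : seq T) : size s = \sum_(x : T) count_mem x s.
Proof.
elim: s => [|y s ih]; first by rewrite big1.
rewrite /= ih big_split /=.
have -> : \sum_i (y == i) = 1.
  rewrite (bigD1 y) //= eqxx big1 // => x /negbTE.
  by rewrite eq_sym => ->.
by rewrite add1n.
Qed.

Lemma prod_extract (F : {set P} -> Poly) (Is : seq {set P}) I :
  (\prod_(J <- Is) F J = F I ^+ (count_mem I Is) * \prod_(J <- Is | J != I) F J)%R.
Proof.
elim: Is => [|J Is ih]; first by rewrite !big_nil expr0 mulr1.
rewrite !big_cons ih /=; case: (eqVneq J I) => [->|nJ] /=.
  by rewrite add1n exprS mulrA.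
by rewrite add0n mulrCA.
Qed.

Lemma inHibi_prod (Is : seq {set P}) (Q : pred {set P}) :
  (forall I, I \in Is -> poset_ideal I) -> inHibi (\prod_(J <- Is | Q J) hibi_gen k J)%R.
Proof.
move=> hI; rewrite big_seq_cond; apply: (big_ind (@inHibi k d P)).
- exact: inHibi1.
- exact: Hibi_mul.
- by move=> J /andP[/hI hJ _]; apply: Hibi_gen.
Qed.

Lemma G_frob q r g : 0 < q -> #|{set P}| * q.-1 < r -> G r g -> frob_pow q g.
Proof.
move=> q0 hr [Is [hs hIs ->]].
have [I hI] : exists I, q <= count_mem I Is.
  apply/existsP; apply: contraLR hr; rewrite negb_exists => /forallP hall.
  rewrite -leqNgt -hs size_count -sum_nat_const; apply: leq_sum => I _.
  by have := hall I; rewrite -ltnNge; case: q q0 {hall} => // q' _; rewrite ltnS.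
have IIs : I \in Is by rewrite -has_pred1 has_count; exact: leq_trans hI.
rewrite (prod_extract _ _ I) -(subnK hI) exprD mulrAC.
apply: Ideal_mul.
  apply: Hibi_mul; first by apply: inHibiX; apply: Hibi_gen; apply: hIs.
  exact: inHibi_prod.
apply: Ideal_gen; exists (hibi_gen k I); split => //.
by apply: Ideal_gen; exists I; split => //; apply: hIs.
Qed.

Lemma bounded q : 0 < q -> forall r, #|{set P}| * q.-1 < r -> ~ nu_pred k P q r.
Proof.
move=> q0 r hr; apply; move=> f /pow_sub_G; apply: in_ideal_mono => g.
exact: G_frob.
Qed.

Lemma nu_ge q r : 0 < q -> nu_pred k P q r -> r <= nu k P q.
Proof.
move=> q0 hr.
have ex : exists n0, nu_pred k P q n0 /\ forall r, nu_pred k P q r -> r <= n0.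
  set B := #|{set P}| * q.-1.
  have hb := @bounded q q0.
  suff H: forall m, (exists r0, r0 <= m /\ nu_pred k P q r0) ->
     (forall r, m < r -> ~ nu_pred k P q r) ->
     exists n0, nu_pred k P q n0 /\ forall r, nu_pred k P q r -> r <= n0.
    apply: (H B) => //; exists r; split => //.
    by rewrite leqNgt; apply/negP => /hb; apply.
  elim => [|m ih] [r0 [hr0 hn]] hbig.
    exists 0; split; first by move: hr0; rewrite leqn0 => /eqP <-.
    by move=> r' hr'; rewrite leqNgt; apply/negP => /hbig.
  case: (classic (nu_pred k P q m.+1)) => hm.
    exists m.+1; split => // r' hr'; rewrite leqNgt; apply/negP => /hbig; exact.
  apply: ih.
    exists r0; split => //; rewrite leq_eqVlt in hr0; case/orP: hr0 => [/eqP e|//].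
    by rewrite e in hn.
  move=> r' hr'; case: (eqVneq r' m.+1) => [->|ne] //; apply: hbig.
  by rewrite ltn_neqAle eq_sym ne.
have := epsilon_spec (inhabits 0) _ ex.
by rewrite -/(nu k P q) => [[_ /(_ r hr)]].
Qed.

End CC.

Section GG.
Variables (k : fieldType) (d : Order.disp_t) (P : finPOrderType d).

Lemma nu_path (p e : nat) (hp : p \in [pchar k]%R) (q1 : P) (rest : seq P)
  (hpath : path (fun x y => covers x y || covers y x) q1 rest)
  (hlast : last true (pairmap (@covers d P) q1 rest))
  (hstar : star_cond (q1 :: rest)) :
  (p ^ e).-1 * (len_star (q1 :: rest)).+2 <= nu k P (p ^ e).
Proof.
have q0 : 0 < p ^ e by rewrite expn_gt0 prime_gt0 // (GRing.pcharf_prime hp).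
apply: nu_ge => // H.
set a := (p ^ e).-1 * (len_star (q1 :: rest)).+2.
have w := @wit_pow k d P (bb q1 rest (p ^ e)) a (@bb_mono _ _ q1 rest (p ^ e)).
have := frob_Good hp (H _ w) => /wit_Phi [I [hI [m' [[hs1 hs2] em]]]].
apply: (@path_contra _ _ q1 rest hpath hlast hstar (p ^ e) q0 I (m' (iT P)) (fun x => m' (iX x))) => //.
- have := congr1 (fun m : 'X_{1..nvars P} => m (iT P)) em; rewrite /= m0T mnmDE mulmnE eIT mul1n.
  by [].
- move=> x; have := congr1 (fun m : 'X_{1..nvars P} => m (iX x)) em.
  rewrite /= (m0X (a := a)) ?mnmDE ?mulmnE ?eIX //.
  by move=> y; apply: bb_le.
Qed.

Lemma path_rank (hP : 0 < #|P|) : exists q1 (rest : seq P),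
  [/\ path (fun x y => covers x y || covers y x) q1 rest,
      last true (pairmap (@covers d P) q1 rest),
      star_cond (q1 :: rest) & len_star (q1 :: rest) = rank_star P].
Proof.
have [x0 _] := card_gt0P hP.
pose K n := exists q1 (rest : seq P),
  [/\ path (fun x y => covers x y || covers y x) q1 rest,
      last true (pairmap (@covers d P) q1 rest),
      star_cond (q1 :: rest) & len_star (q1 :: rest) = n].
have K0 : K 0.
  exists x0, [::]; split => //.
  by rewrite /star_cond; apply/forallP => -[].
have Kmax : forall x y, K x -> K y -> K (maxn x y).
  by move=> x y hx hy; case: (leqP x y).
rewrite /rank_star; apply: (big_ind K) => // n _.
apply: (big_ind K) => // tt /andP[hm hs].
move: hm hs; case: tt => -[|q1 rest] //= _.
case/andP => /and4P[_ _ hpa hla] _ hs.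
by exists q1, rest.
Qed.

End GG.

Import GRing.Theory Num.Theory.

Theorem lemma2p5 (k : fieldType) (p : nat) (hp : p \in [pchar k]%R)
  (d : Order.disp_t) (P : finPOrderType d) (hP : (0 < #|P|)%N) :
  liminf_ge (fun e => ((nu k P (p ^ e))%:R / (p ^ e)%:R)%R)
            ((rank_star P + 2)%:R)%R.
Proof.
have [q1 [rest [hpa hla hst hlen]]] := path_rank hP.
have pp : prime p := GRing.pcharf_prime hp.
move=> eps eps0.
set r : rat := ((rank_star P + 2)%:R)%R.
have r0 : (0 <= r / eps)%R by rewrite divr_ge0 // ?ler0n // ltW.
set N := Num.Def.archi_bound (r / eps)%R.
have hN := archi_boundP r0.
exists N => e hE.
set q := p ^ e.
have hnu := nu_path e hp hpa hla hst.
rewrite hlen -/q in hnu.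
have q0 : (0 < q)%N by rewrite expn_gt0 prime_gt0.
have Nq : (N < q)%N.
  apply: leq_trans (ltn_expl N (prime_gt1 pp)) _.
  by rewrite leq_exp2l ?prime_gt1.
have qr : (0 < q%:R :> rat)%R by rewrite ltr0n.
rewrite ler_pdivlMr //.
have h1 : (r < eps * q%:R)%R.
  rewrite ltr_pdivrMr // in hN.
  apply: lt_le_trans hN _; rewrite mulrC ler_wpM2l ?ltW //.
  by rewrite ltr_nat.
have h2 : (r * q%:R - r <= (nu k P q)%:R)%R.
  have : ((q.-1 * (rank_star P).+2 + (rank_star P).+2) <= nu k P q + (rank_star P).+2)%N.
    by rewrite leq_add2r.
  rewrite -mulSnr prednK // -(ler_nat rat) natrD natrM.
  rewrite /r addn2.
  move=> h; rewrite mulrC; lra.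
rewrite mulrBl; lra.
Qed.
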